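(* Let $\alpha,\beta,\gamma$ be partitions with $\alpha_1\le2$ and let $\Gamma$ be an LR-tableau of type $(\alpha,\beta,\gamma)$ such that every row of $\Gamma$ contains at most one (non-empty) box. Let $\Delta,\Delta'\in\mathcal D_\Gamma$. Then $\Delta'\to\Delta$ (i.e. $\Delta'<_{\rm arc}\Delta$ and there is no $\Delta''\in\mathcal D_\Gamma$ with $\Delta'<_{\rm arc}\Delta''<_{\rm arc}\Delta$) if and only if $\Delta'$ is obtained from $\Delta$ by a single move of type (A) or (B) which reduces the number of crossings by one.
   Context: For a partition $\lambda$, $\lambda'$ is its conjugate; the diagram of $\lambda$ is drawn with $\lambda'_i$ boxes in row $i$, so the $i$-th row of $\beta\setminus\gamma$ consists of the boxes in columns $\gamma'_i+1,\dots,\beta'_i$. With $\alpha_1\le 2$, $\alpha'=(\alpha'_1,\alpha'_2)$. An LR-tableau of type $(\alpha,\beta,\gamma)$ is a filling of $\beta\setminus\gamma$ with $\alpha'_1$ entries $1$ and $\alpha'_2$ entries $2$, weakly increasing along rows, strictly increasing down columns, such that for each $c\ge0$ the number of entries $1$ in columns to the right of column $c$ is at least the number of entries $2$ there. Place the positive integers on a line in decreasing order from left to right. An arc is a pair $(m,n)$, $m>n$ positive integers (source $m$, target $n$); a pole at $n$ is regarded as an arc $(\infty,n)$. An arc diagram of type $(\alpha,\beta,\gamma)$ is a finite multiset of $\alpha'_2$ arcs and $\alpha'_1-\alpha'_2$ poles with, for each $i$, exactly $\beta'_i-\gamma'_i$ members having source or target $i$. It has LR type $\Gamma$ if for each $i$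 the number of arcs with source $i$ equals the number of entries $2$ in row $i$ of $\Gamma$; $\mathcal D_\Gamma$ is the set of such diagrams. Members $(m,n),(k,r)$ cross iff $r<n<k<m$ or $n<r<m<k$; the number of crossings is the number of crossing pairs. Moves: for $a>b>c>d$, (A) replaces arcs $(a,c),(b,d)$ by $(a,d),(b,c)$; (C) replaces them by $(a,b),(c,d)$; for $a>b>c$, (B) replaces arc $(a,c)$ and pole $(\infty,b)$ by arc $(a,b)$ and pole $(\infty,c)$; (D) replaces them by arc $(b,c)$ and pole $(\infty,a)$. $\Delta\le_{\rm arc}\Delta'$ iff $\Delta$ is obtained from $\Delta'$ by a finite (possibly empty) sequence of moves; $<_{\rm arc}$ is the strict relation. *)

(* Defs.v *)
From mathcomp Require Import all_boot.
Set Implicit Arguments. Unset Strict Implicit. Unset Printing Implicit Defensive.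

(* A partition is a weakly decreasing sequence of positive integers;
   lambda_j (1-based) is nth 0 lambda (j-1). *)
Definition is_partition (l : seq nat) : bool :=
  sorted geq l && all (fun x => 0 < x) l.

Definition conj (l : seq nat) (i : nat) : nat := count (fun x => i <= x) l.

(* box (i, j) = row i, column j; it lies in beta \ gamma iff
   i >= 1 and gamma'_i < j <= beta'_i *)
Definition in_skew (b g : seq nat) (x : nat * nat) : bool :=
  (0 < x.1) && (conj g x.1 < x.2 <= conj b x.1).

(* the (finite) list of boxes of beta \ gamma; rows and columns are bounded
   by |beta| = sumn beta *)
Definition boxes (b g : seq nat) : seq (nat * nat) :=
  [seq x <- [seq (i, j) | i <- iota 1 (sumn b), j <- iota 1 (sumn b)]
   | in_skew b g x].

(* A filling of beta \ gamma: a function on (row, column) pairs; only its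
   values on the boxes of beta \ gamma matter. *)
Definition filling := (nat * nat -> nat)%type.

(* LR-tableau of type (alpha, beta, gamma), with alpha_1 <= 2 so that
   alpha' = (alpha'_1, alpha'_2). *)
Definition is_LR_tableau (a b g : seq nat) (T : filling) : Prop :=
  (forall i, 0 < i -> conj g i <= conj b i) /\
  (forall x, x \in boxes b g -> (T x == 1) || (T x == 2)) /\
  count (fun x => T x == 1) (boxes b g) = conj a 1 /\
  count (fun x => T x == 2) (boxes b g) = conj a 2 /\
  (forall i j, in_skew b g (i, j) -> in_skew b g (i, j.+1) ->
     T (i, j) <= T (i, j.+1)) /\
  (forall i j, in_skew b g (i, j) -> in_skew b g (i.+1, j) ->
     T (i, j) < T (i.+1, j)) /\
  (forall c, count (fun x => (c < x.2) && (T x == 2)) (boxes b g)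
             <= count (fun x => (c < x.2) && (T x == 1)) (boxes b g)).

Definition twos_in_row (b g : seq nat) (T : filling) (i : nat) : nat :=
  count (fun x => (x.1 == i) && (T x == 2)) (boxes b g).

(* A member is (source, target); source None stands for infinity (a pole). *)
Definition member := (option nat * nat)%type.

Definition is_arc (x : member) : bool := if x.1 is Some _ then true else false.
Definition is_pole (x : member) : bool := ~~ is_arc x.

Definition wf_member (x : member) : bool :=
  (0 < x.2) && (if x.1 is Some m then x.2 < m else true).

(* A finite multiset of members is represented by a sequence; two sequences
   represent the same multiset iff they are perm_eq. All notions below are
   invariant under perm_eq. *)
Definition arc_diagram := seq member.

Definition is_arc_diagram (a b g : seq nat) (D : arc_diagram) : Prop :=
  all wf_member D /\
  count is_arc D = conj a 2 /\
  count is_pole D = conj a 1 - conj a 2 /\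
  (forall i, 0 < i ->
     count (fun x => (x.1 == Some i) || (x.2 == i)) D = conj b i - conj g i).

Definition has_LR_type (b g : seq nat) (T : filling) (D : arc_diagram) : Prop :=
  forall i, 0 < i -> count (fun x => x.1 == Some i) D = twos_in_row b g T i.

Definition in_DGamma (a b g : seq nat) (T : filling) (D : arc_diagram) : Prop :=
  is_arc_diagram a b g D /\ has_LR_type b g T D.

Definition ltx (u v : option nat) : bool :=
  match u, v with
  | Some p, Some q => p < q
  | Some _, None => true
  | None, _ => false
  end.

Definition cross (x y : member) : bool :=
  let: (m, n) := x in let: (k, r) := y in
  (ltx (Some r) (Some n) && ltx (Some n) k && ltx k m) ||
  (ltx (Some n) (Some r) && ltx (Some r) m && ltx m k).

Fixpoint crossings (D : arc_diagram) : nat :=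
  if D is x :: D' then count (cross x) D' + crossings D' else 0.

Inductive move_kind := MoveA | MoveB | MoveC | MoveD.

Definition arc_move_of (k : move_kind) (Dold Dnew : arc_diagram) : Prop :=
  match k with
  | MoveA => exists a b c d rest, 0 < d /\ d < c /\ c < b /\ b < a /\
       perm_eq Dold ((Some a, c) :: (Some b, d) :: rest) /\
       perm_eq Dnew ((Some a, d) :: (Some b, c) :: rest)
  | MoveC => exists a b c d rest, 0 < d /\ d < c /\ c < b /\ b < a /\
       perm_eq Dold ((Some a, c) :: (Some b, d) :: rest) /\
       perm_eq Dnew ((Some a, b) :: (Some c, d) :: rest)
  | MoveB => exists a b c rest, 0 < c /\ c < b /\ b < a /\
       perm_eq Dold ((Some a, c) :: (None, b) :: rest) /\
       perm_eq Dnew ((Some a, b) :: (None, c) :: rest)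
  | MoveD => exists a b c rest, 0 < c /\ c < b /\ b < a /\
       perm_eq Dold ((Some a, c) :: (None, b) :: rest) /\
       perm_eq Dnew ((Some b, c) :: (None, a) :: rest)
  end.

Definition arc_move (Dold Dnew : arc_diagram) : Prop :=
  exists k, arc_move_of k Dold Dnew.

Inductive arc_le : arc_diagram -> arc_diagram -> Prop :=
| arc_le_refl D D' : perm_eq D D' -> arc_le D D'
| arc_le_step D D1 D' : arc_move D1 D -> arc_le D1 D' -> arc_le D D'.

Definition arc_lt (D D' : arc_diagram) : Prop := arc_le D D' /\ ~~ perm_eq D D'.

Definition arc_cover (a b g : seq nat) (T : filling) (D' D : arc_diagram) : Prop :=
  arc_lt D' D /\
  ~ (exists D'', in_DGamma a b g T D'' /\ arc_lt D' D'' /\ arc_lt D'' D).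

(* Main.v *)
Require Import Defs.
From mathcomp Require Import all_boot zify.
Set Implicit Arguments. Unset Strict Implicit.

Ltac solve_atoms :=
  try (exfalso; lia); try done;
  match goal with
  | |- context [leq ?x ?y] => case: (leqP x y) => ?; solve_atoms
  end.

Definition inc (i : nat) (x : member) : bool := (x.1 == Some i) || (x.2 == i).

Lemma inc_Some i m n : inc i (Some m, n) = (m == i) || (n == i).
Proof. by []. Qed.
Lemma inc_None i n : inc i (None, n) = (n == i).
Proof. by []. Qed.

Definition wA (a b c d : nat) (x : member) : nat :=
  if x.1 is Some m then ((d < x.2 < c) && (b < m < a)) * 2 else 0.

Lemma crossA a b c d (x : member) :
  0 < d -> d < c -> c < b -> b < a -> wf_member x ->
  ~~ inc a x -> ~~ inc b x -> ~~ inc c x -> ~~ inc d x ->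
  cross (Some a, c) x + cross (Some b, d) x =
  cross (Some a, d) x + cross (Some b, c) x + wA a b c d x.
Proof.
case: x => [[m|] n]; rewrite ?inc_Some ?inc_None /wf_member /wA /cross /ltx /=.
- move=> h1 h2 h3 h4 /andP[h5 h6] /norP[/eqP ? /eqP ?] /norP[/eqP ? /eqP ?]
    /norP[/eqP ? /eqP ?] /norP[/eqP ? /eqP ?].
  solve_atoms.
- move=> h1 h2 h3 h4 h5 /eqP ? /eqP ? /eqP ? /eqP ?.
  solve_atoms.
Qed.

Definition wB (a b c : nat) (x : member) : nat :=
  if (c < x.2 < b) then (if x.1 is Some m then (a < m) * 2 else 1) else 0.

Lemma crossB a b c (x : member) :
  0 < c -> c < b -> b < a -> wf_member x ->
  ~~ inc a x -> ~~ inc b x -> ~~ inc c x ->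
  cross (Some a, c) x + cross (None, b) x =
  cross (Some a, b) x + cross (None, c) x + wB a b c x.
Proof.
case: x => [[m|] n]; rewrite ?inc_Some ?inc_None /wf_member /wB /cross /ltx /=.
- move=> h1 h2 h3 /andP[h5 h6] /norP[/eqP ? /eqP ?] /norP[/eqP ? /eqP ?]
    /norP[/eqP ? /eqP ?].
  solve_atoms.
- move=> h1 h2 h3 h5 /eqP ? /eqP ? /eqP ?.
  solve_atoms.
Qed.

Lemma crossC x y : cross x y = cross y x.
Proof. by case: x => m n; case: y => k r /=; rewrite orbC. Qed.

Lemma cross_irr x : cross x x = false.
Proof. case: x => [[m|] n] /=; by rewrite ltnn. Qed.

Definition good (D : arc_diagram) := all wf_member D /\ forall i, count (inc i) D <= 1.
Definition src (x : member) : nat := if x.1 is Some m then m else 0.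
Definition ssum (D : arc_diagram) := sumn (map src D).
Definition S2 (D : arc_diagram) := sumn [seq count (cross x) D | x <- D].
Definition scount (i : nat) (D : arc_diagram) := count (fun x : member => x.1 == Some i) D.

Lemma sumn_map_add (T:Type) (f g : T -> nat) s :
  sumn [seq f x + g x | x <- s] = sumn (map f s) + sumn (map g s).
Proof. elim: s => //= x s ->; lia. Qed.

Lemma crossings2 D : 2 * crossings D = S2 D.
Proof.
rewrite /S2; elim: D => //= x s IH.
rewrite cross_irr add0n.
have -> : [seq count (cross y) (x :: s) | y <- s] =
          [seq cross x y + count (cross y) s | y <- s].
  by apply: eq_map => y /=; rewrite crossC.
rewrite sumn_map_add sumn_count. lia.
Qed.

Lemma crossings_perm D E : perm_eq D E -> crossings D = crossings E.
Proof.
move=> h.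
suff : 2 * crossings D = 2 * crossings E by lia.
rewrite !crossings2 /S2.
have -> : [seq count (cross x) D | x <- D] = [seq count (cross x) E | x <- D].
  by apply: eq_map => x; move/permP: h => h; rewrite h.
by apply: perm_sumn; apply: perm_map.
Qed.

Lemma ssum_perm D E : perm_eq D E -> ssum D = ssum E.
Proof. by move=> h; apply: perm_sumn; apply: perm_map. Qed.

Lemma good_perm D E : perm_eq D E -> good D -> good E.
Proof.
move=> h [h1 h2]; split; first by rewrite -(perm_all _ h).
by move=> i; move/permP: h => h; rewrite -h.
Qed.

Lemma move_generic (X Y : arc_diagram) u v u' v' r :
  good X -> perm_eq X (u :: v :: r) -> perm_eq Y (u' :: v' :: r) ->
  wf_member u' -> wf_member v' ->
  (forall i, inc i u + inc i v = inc i u' + inc i v') ->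
  is_arc u + is_arc v = is_arc u' + is_arc v' ->
  [/\ good Y, count is_arc Y = count is_arc X, count is_pole Y = count is_pole X
    & forall i, count (inc i) Y = count (inc i) X].
Proof.
move=> [hw hc] hX hY w1 w2 hi ha.
have cnt : forall p : pred member, p u + p v = p u' + p v' -> count p Y = count p X.
  by move=> p e; move/permP: hX => hX; move/permP: hY => hY; rewrite hX hY /=; lia.
have hcnt : forall i, count (inc i) Y = count (inc i) X by move=> i; apply: cnt.
split => //.
- split; last by move=> i; rewrite hcnt.
  rewrite (perm_all _ hY) /= w1 w2 /=.
  by move: hw; rewrite (perm_all _ hX) /= => /and3P[].
- by apply: cnt.
- apply: cnt; rewrite /is_pole.
  by move: ha; case: (is_arc u); case: (is_arc v); case: (is_arc u'); case: (is_arc v').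
Qed.

Lemma move_basic k X Y : good X -> arc_move_of k X Y ->
  [/\ good Y, count is_arc Y = count is_arc X, count is_pole Y = count is_pole X
    & forall i, count (inc i) Y = count (inc i) X].
Proof.
move=> g; case: k => /=.
- move=> [a [b [c [d [r [h1 [h2 [h3 [h4 [hX hY]]]]]]]]]].
  apply: (move_generic g hX hY); rewrite /wf_member /= ?inc_Some //; try lia.
  by move=> i; rewrite !inc_Some; case: (a =P i); case: (b =P i); case: (c =P i); case: (d =P i) => /= *; lia.
- move=> [a [b [c [r [h1 [h2 [h3 [hX hY]]]]]]]].
  apply: (move_generic g hX hY); rewrite /wf_member /= ?inc_Some ?inc_None //; try lia.
  by move=> i; rewrite !inc_Some !inc_None; case: (a =P i); case: (b =P i); case: (c =P i) => /= *; lia.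
- move=> [a [b [c [d [r [h1 [h2 [h3 [h4 [hX hY]]]]]]]]]].
  apply: (move_generic g hX hY); rewrite /wf_member /= ?inc_Some //; try lia.
  by move=> i; rewrite !inc_Some; case: (a =P i); case: (b =P i); case: (c =P i); case: (d =P i) => /= *; lia.
- move=> [a [b [c [r [h1 [h2 [h3 [hX hY]]]]]]]].
  apply: (move_generic g hX hY); rewrite /wf_member /= ?inc_Some ?inc_None //; try lia.
  by move=> i; rewrite !inc_Some !inc_None; case: (a =P i); case: (b =P i); case: (c =P i) => /= *; lia.
Qed.


Lemma move_ssum k X Y : arc_move_of k X Y ->
  match k with
  | MoveA | MoveB => ssum Y = ssum X /\ forall i, scount i Y = scount i X
  | _ => ssum Y < ssum X end.
Proof.
case: k => /=.
- move=> [a [b [c [d [r [h1 [h2 [h3 [h4 [hX hY]]]]]]]]]].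
  rewrite (ssum_perm hX) (ssum_perm hY) /scount; split; first by rewrite /ssum /src /=; lia.
  by move=> i; move/permP: hX => ->; move/permP: hY => -> /=; lia.
- move=> [a [b [c [r [h1 [h2 [h3 [hX hY]]]]]]]].
  rewrite (ssum_perm hX) (ssum_perm hY) /scount; split; first by rewrite /ssum /src /=; lia.
  by move=> i; move/permP: hX => ->; move/permP: hY => -> /=; lia.
- move=> [a [b [c [d [r [h1 [h2 [h3 [h4 [hX hY]]]]]]]]]].
  rewrite (ssum_perm hX) (ssum_perm hY) /ssum /src /=; lia.
- move=> [a [b [c [r [h1 [h2 [h3 [hX hY]]]]]]]].
  rewrite (ssum_perm hX) (ssum_perm hY) /ssum /src /=; lia.
Qed.

Lemma rest_noinc X u v r i : good X -> perm_eq X (u :: v :: r) -> inc i u || inc i v ->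
  forall x, x \in r -> ~~ inc i x.
Proof.
move=> [_ hc] hp huv x xr; apply/negP => hx.
have h1 := hc i; move/permP: hp => hp; rewrite hp /= in h1.
have : 0 < count (inc i) r by rewrite -has_count; apply/hasP; exists x.
move: huv h1; case: (inc i u); case: (inc i v) => //= _; rewrite ?add0n add1n ltnS leqn0 => /eqP e; by rewrite e.
Qed.

Lemma rest_wf X u v r : good X -> perm_eq X (u :: v :: r) -> forall x, x \in r -> wf_member x.
Proof.
move=> [hw _] hp x xr; move: hw; rewrite (perm_all _ hp) /= => /and3P[_ _ /allP]; apply.
exact: xr.
Qed.

Lemma sum_rest (f g h k : member -> bool) (w : member -> nat) r :
  (forall x, x \in r -> f x + g x = h x + k x + w x) ->
  count f r + count g r = count h r + count k r + sumn (map w r).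
Proof.
elim: r => //= x r IH H.
have := H x (mem_head _ _).
have : count f r + count g r = count h r + count k r + sumn (map w r).
  by apply: IH => y hy; apply: H; rewrite in_cons hy orbT.
lia.
Qed.

Lemma crossings_cons2 u v r : crossings (u :: v :: r) =
  (cross u v + count (cross u) r) + (count (cross v) r + crossings r).
Proof. reflexivity. Qed.

Lemma crossings_A X Y a b c d r : good X -> 0 < d -> d < c -> c < b -> b < a ->
  perm_eq X ((Some a, c) :: (Some b, d) :: r) -> perm_eq Y ((Some a, d) :: (Some b, c) :: r) ->
  crossings X = crossings Y + 1 + sumn (map (wA a b c d) r).
Proof.
move=> g h1 h2 h3 h4 hX hY.
rewrite (crossings_perm hX) (crossings_perm hY) !crossings_cons2.
have -> : cross (Some a, c) (Some b, d) = true by rewrite /cross /ltx /=; solve_atoms.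
have -> : cross (Some a, d) (Some b, c) = false by rewrite /cross /ltx /=; solve_atoms.
have := @sum_rest (cross (Some a, c)) (cross (Some b, d)) (cross (Some a, d)) (cross (Some b, c))
   (wA a b c d) r.
have e : forall x, x \in r -> cross (Some a, c) x + cross (Some b, d) x =
   cross (Some a, d) x + cross (Some b, c) x + wA a b c d x.
  move=> x xr; apply: crossA => //.
  - exact: rest_wf g hX x xr.
  - by apply: (rest_noinc g hX) => //; rewrite inc_Some eqxx.
  - by apply: (rest_noinc g hX) => //; rewrite !inc_Some eqxx orbT.
  - by apply: (rest_noinc g hX) => //; rewrite !inc_Some eqxx orbT.
  - by apply: (rest_noinc g hX) => //; rewrite !inc_Some eqxx !orbT.
move/(_ e); lia.
Qed.

Lemma crossings_B X Y a b c r : good X -> 0 < c -> c < b -> b < a ->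
  perm_eq X ((Some a, c) :: (None, b) :: r) -> perm_eq Y ((Some a, b) :: (None, c) :: r) ->
  crossings X = crossings Y + 1 + sumn (map (wB a b c) r).
Proof.
move=> g h1 h2 h3 hX hY.
rewrite (crossings_perm hX) (crossings_perm hY) !crossings_cons2.
have -> : cross (Some a, c) (None, b) = true by rewrite /cross /ltx /=; solve_atoms.
have -> : cross (Some a, b) (None, c) = false by rewrite /cross /ltx /=; solve_atoms.
have := @sum_rest (cross (Some a, c)) (cross (None, b)) (cross (Some a, b)) (cross (None, c))
   (wB a b c) r.
have e : forall x, x \in r -> cross (Some a, c) x + cross (None, b) x =
   cross (Some a, b) x + cross (None, c) x + wB a b c x.
  move=> x xr; apply: crossB => //.
  - exact: rest_wf g hX x xr.
  - by apply: (rest_noinc g hX) => //; rewrite inc_Some eqxx.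
  - by apply: (rest_noinc g hX) => //; rewrite inc_None eqxx orbT.
  - by apply: (rest_noinc g hX) => //; rewrite !inc_Some eqxx orbT.
move/(_ e); lia.
Qed.

Lemma moveAB_cross k X Y : good X -> arc_move_of k X Y -> (k = MoveA \/ k = MoveB) ->
  crossings Y < crossings X.
Proof.
move=> g; case: k => /=.
- move=> [a [b [c [d [r [h1 [h2 [h3 [h4 [hX hY]]]]]]]]]] _.
  rewrite (crossings_A g h1 h2 h3 h4 hX hY); lia.
- move=> [a [b [c [r [h1 [h2 [h3 [hX hY]]]]]]]] _.
  rewrite (crossings_B g h1 h2 h3 hX hY); lia.
- by move=> _ [].
- by move=> _ [].
Qed.

Lemma le_chain X Y : arc_le X Y -> good Y ->
  [/\ good X, ssum X <= ssum Y,
      (ssum X = ssum Y -> crossings X <= crossings Y /\ (crossings X = crossings Y -> perm_eq X Y))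
    & (count is_arc X = count is_arc Y /\ count is_pole X = count is_pole Y /\
       forall i, count (inc i) X = count (inc i) Y)].
Proof.
elim => {X Y}.
- move=> X Y h gY.
  have hs : perm_eq Y X by rewrite perm_sym.
  split.
  + exact: good_perm hs gY.
  + by rewrite (ssum_perm h).
  + by rewrite (crossings_perm h).
  + by move/permP: h => h; rewrite !h.
- move=> X D1 Y [k hm] hle IH gY.
  have [g1 s1 c1 [a1 [p1 i1]]] := IH gY.
  have [gX aX pX iX] := move_basic g1 hm.
  have hs := move_ssum hm.
  have hc : (k = MoveA \/ k = MoveB) -> crossings X < crossings D1.
    by move=> hk; apply: (moveAB_cross g1 hm hk).
  split => //.
  + by case: k hm hs hc => _ hs _; try case: hs => hs _; lia.
  + move=> e.
    have hk : k = MoveA \/ k = MoveB.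
      by case: k hm hs hc => _ hs _; auto; lia.
    have hk' := hc hk.
    case: k hm hs hc hk hk' => _ hs _ _ hk';
      try (case: hs => hs _; have [h5 h6] := c1 ltac:(lia); split; [lia | lia]);
      exfalso; lia.
  + by split; [rewrite aX | split; [rewrite pX | move=> i; rewrite iX]].
Qed.

Lemma inc0 (D : arc_diagram) : all wf_member D -> count (inc 0) D = 0.
Proof.
elim: D => //= x s IH /andP[hx hs]; rewrite IH //.
case: x hx => [[m|] n]; rewrite /wf_member ?inc_Some ?inc_None /= => h.
- case: (m =P 0); case: (n =P 0) => /= *; lia.
- case: (n =P 0) => /= *; lia.
Qed.

Lemma DG_good al be ga T D : (forall i, 0 < i -> conj be i - conj ga i <= 1) ->
  in_DGamma al be ga T D -> good D.
Proof.
move=> hb [[hw [_ [_ hinc]]] _]; split => // -[|i]; first by rewrite inc0.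
have e : count (inc i.+1) D = conj be i.+1 - conj ga i.+1 by apply: hinc.
have := hb i.+1 isT; lia.
Qed.

Lemma ssum_filter (D : arc_diagram) : ssum D = sumn [seq src x | x <- D & is_arc x].
Proof.
rewrite /ssum; elim: D => //= -[[m|] n] s IH /=; rewrite IH //.
Qed.

Lemma ssum_eq (D E : arc_diagram) : all wf_member D -> all wf_member E ->
  (forall i, 0 < i -> scount i D = scount i E) -> ssum D = ssum E.
Proof.
move=> hD hE h; rewrite !ssum_filter; apply: perm_sumn.
rewrite /perm_eq; apply/allP => j _ /=; apply/eqP.
rewrite !count_map !count_filter.
case: j => [|j].
- have z : forall F : arc_diagram, all wf_member F ->
    count (predI (preim src (pred1 0)) is_arc) F = 0.
    move=> F; elim: F => //= x s IH /andP[hx hs]; rewrite IH //.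
    case: x hx => [[m|] n]; rewrite /wf_member /src /= => hh //.
    case: (m =P 0) => /= *; lia.
  by rewrite !z.
- have e : forall F : arc_diagram, count (predI (preim src (pred1 j.+1)) is_arc) F = scount j.+1 F.
    by move=> F; apply: eq_count => x; case: x => [[m|] n]; rewrite /src /is_arc /= ?andbT.
  by rewrite !e h.
Qed.

Lemma LR_ssum al be ga T D E : in_DGamma al be ga T D -> in_DGamma al be ga T E ->
  ssum D = ssum E.
Proof.
move=> [[hw _] hl] [[hw' _] hl']; apply: ssum_eq => // i hi.
by rewrite /scount hl // hl'.
Qed.

Lemma DG_move al be ga T k D E : (k = MoveA \/ k = MoveB) -> good D ->
  in_DGamma al be ga T D -> arc_move_of k D E -> in_DGamma al be ga T E.
Proof.
move=> hk g [[hw [ha [hp hi]]] hl] hm.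
have [[gw _] aE pE iE] := move_basic g hm.
have hs := move_ssum hm.
have sc : forall i, scount i E = scount i D by case: hk hm hs => -> _ [].
split.
- split => //; split; first by rewrite aE.
  split; first by rewrite pE.
  move=> i hi0; have := hi i hi0; have := iE i; rewrite /inc => -> //.
- by move=> i hi0; have := sc i; rewrite /scount => ->; apply: hl.
Qed.

Lemma le_inv X Y : arc_le X Y -> perm_eq X Y \/ exists D1 k, arc_move_of k D1 X /\ arc_le D1 Y.
Proof.
case => [A B h | A D1 B [k hm] h]; first by left.
by right; exists D1, k.
Qed.

Lemma between2 al be ga T D D'' D' k1 k2 :
  (k1 = MoveA \/ k1 = MoveB) -> (k2 = MoveA \/ k2 = MoveB) ->
  in_DGamma al be ga T D -> good D ->
  arc_move_of k1 D D'' -> arc_move_of k2 D'' D' ->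
  exists D0, in_DGamma al be ga T D0 /\ arc_lt D' D0 /\ arc_lt D0 D.
Proof.
move=> hk1 hk2 hD g m1 m2.
have [g1 _ _ _] := move_basic g m1.
have c1 := moveAB_cross g m1 hk1.
have c2 := moveAB_cross g1 m2 hk2.
exists D''; split; first exact: DG_move hk1 g hD m1.
split; split.
- apply: (arc_le_step (D1 := D'')); first by exists k2.
  by apply: arc_le_refl; rewrite perm_refl.
- by apply/negP => hp; have := crossings_perm hp; lia.
- apply: (arc_le_step (D1 := D)); first by exists k1.
  by apply: arc_le_refl; rewrite perm_refl.
- by apply/negP => hp; have := crossings_perm hp; lia.
Qed.

Lemma between3 al be ga T D D'' E1 D' k1 k2 k3 :
  (k1 = MoveA \/ k1 = MoveB) -> (k2 = MoveA \/ k2 = MoveB) -> (k3 = MoveA \/ k3 = MoveB) ->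
  in_DGamma al be ga T D -> good D ->
  arc_move_of k1 D D'' -> arc_move_of k2 D'' E1 -> arc_move_of k3 E1 D' ->
  exists D0, in_DGamma al be ga T D0 /\ arc_lt D' D0 /\ arc_lt D0 D.
Proof.
move=> hk1 hk2 hk3 hD g m1 m2 m3.
have [g1 _ _ _] := move_basic g m1.
have [g2 _ _ _] := move_basic g1 m2.
have c1 := moveAB_cross g m1 hk1.
have c2 := moveAB_cross g1 m2 hk2.
have c3 := moveAB_cross g2 m3 hk3.
exists D''; split; first exact: DG_move hk1 g hD m1.
split; split.
- apply: (arc_le_step (D1 := E1)); first by exists k3.
  apply: (arc_le_step (D1 := D'')); first by exists k2.
  by apply: arc_le_refl; rewrite perm_refl.
- by apply/negP => hp; have := crossings_perm hp; lia.
- apply: (arc_le_step (D1 := D)); first by exists k1.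
  by apply: arc_le_refl; rewrite perm_refl.
- by apply/negP => hp; have := crossings_perm hp; lia.
Qed.

Lemma sumn_pos (w : member -> nat) (r : seq member) : 0 < sumn (map w r) ->
  exists2 x, x \in r & 0 < w x.
Proof.
elim: r => //= x r IH h.
case: (posnP (w x)) => hx.
- have [y yr hy] := IH ltac:(lia). by exists y => //; rewrite in_cons yr orbT.
- by exists x => //; rewrite mem_head.
Qed.

Ltac ptac hX hY hr :=
  first [ exact: perm_refl
        | (apply/permP => f /=; lia)
        | (apply: (perm_trans hX); apply/permP => f; rewrite /= (elimT permP hr) /=; lia)
        | (apply: (perm_trans hY); apply/permP => f; rewrite /= (elimT permP hr) /=; lia) ].

Lemma interA al be ga T D D' a b c d r x : in_DGamma al be ga T D -> good D ->
  0 < d -> d < c -> c < b -> b < a ->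
  perm_eq D ((Some a, c) :: (Some b, d) :: r) -> perm_eq D' ((Some a, d) :: (Some b, c) :: r) ->
  x \in r -> 0 < wA a b c d x ->
  exists D0, in_DGamma al be ga T D0 /\ arc_lt D' D0 /\ arc_lt D0 D.
Proof.
move=> hD g h1 h2 h3 h4 hX hY xr hw.
have [r' hr] : exists r', perm_eq r (x :: r') by exists (rem x r); exact: perm_to_rem xr.
case: x xr hw hr => [[q|] p] xr hw hr; last by [].
have /andP[/andP[hp1 hp2] /andP[hq1 hq2]] : (d < p < c) && (b < q < a)
  by move: hw; rewrite /wA /=; case: (_ && _).
apply: (@between3 _ _ _ _ _ ((Some a, p) :: (Some q, c) :: (Some b, d) :: r')
   ((Some a, d) :: (Some b, p) :: (Some q, c) :: r') _ MoveA MoveA MoveA) => //; try by left.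
- exists a, q, c, p, ((Some b, d) :: r'); repeat split; try lia; ptac hX hY hr.
- exists a, b, p, d, ((Some q, c) :: r'); repeat split; try lia; ptac hX hY hr.
- exists q, b, c, p, ((Some a, d) :: r'); repeat split; try lia; ptac hX hY hr.
Qed.

Lemma interB al be ga T D D' a b c r x : in_DGamma al be ga T D -> good D ->
  0 < c -> c < b -> b < a ->
  perm_eq D ((Some a, c) :: (None, b) :: r) -> perm_eq D' ((Some a, b) :: (None, c) :: r) ->
  x \in r -> 0 < wB a b c x ->
  exists D0, in_DGamma al be ga T D0 /\ arc_lt D' D0 /\ arc_lt D0 D.
Proof.
move=> hD g h1 h2 h3 hX hY xr hw.
have [r' hr] : exists r', perm_eq r (x :: r') by exists (rem x r); exact: perm_to_rem xr.
case: x xr hw hr => [[q|] p] xr hw hr.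
- have /andP[hp1 hp2] : c < p < b by move: hw; rewrite /wB /=; case: (c < p < b).
  have hq : a < q by move: hw; rewrite /wB /= hp1 hp2 /=; case: (a < q).
  apply: (@between3 _ _ _ _ _ ((Some q, c) :: (Some a, p) :: (None, b) :: r')
     ((Some a, b) :: (None, p) :: (Some q, c) :: r') _ MoveA MoveB MoveB) => //; try by [left|right].
  + exists q, a, p, c, ((None, b) :: r'); repeat split; try lia; ptac hX hY hr.
  + exists a, b, p, ((Some q, c) :: r'); repeat split; try lia; ptac hX hY hr.
  + exists q, p, c, ((Some a, b) :: r'); repeat split; try lia; ptac hX hY hr.
- have /andP[hp1 hp2] : c < p < b by move: hw; rewrite /wB /=; case: (c < p < b).
  apply: (@between2 _ _ _ _ _ ((Some a, p) :: (None, c) :: (None, b) :: r')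
     _ MoveB MoveB) => //; try by right.
  + exists a, p, c, ((None, b) :: r'); repeat split; try lia; ptac hX hY hr.
  + exists a, b, p, ((None, c) :: r'); repeat split; try lia; ptac hX hY hr.
Qed.

Lemma move_perm k X X' Y : perm_eq X X' -> arc_move_of k X Y -> arc_move_of k X' Y.
Proof.
move=> h; have h' : perm_eq X' X by rewrite perm_sym.
case: k => /=.
- move=> [a [b [c [d [r [h1 [h2 [h3 [h4 [hX hY]]]]]]]]]].
  exists a, b, c, d, r; repeat split => //; exact: perm_trans h' hX.
- move=> [a [b [c [r [h1 [h2 [h3 [hX hY]]]]]]]].
  exists a, b, c, r; repeat split => //; exact: perm_trans h' hX.
- move=> [a [b [c [d [r [h1 [h2 [h3 [h4 [hX hY]]]]]]]]]].
  exists a, b, c, d, r; repeat split => //; exact: perm_trans h' hX.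
- move=> [a [b [c [r [h1 [h2 [h3 [hX hY]]]]]]]].
  exists a, b, c, r; repeat split => //; exact: perm_trans h' hX.
Qed.

Theorem mainTheorem4 (alpha beta gamma : seq nat) (T : filling)
    (D D' : arc_diagram) :
  is_partition alpha -> is_partition beta -> is_partition gamma ->
  nth 0 alpha 0 <= 2 ->
  is_LR_tableau alpha beta gamma T ->
  (forall i, 0 < i -> conj beta i - conj gamma i <= 1) ->
  in_DGamma alpha beta gamma T D -> in_DGamma alpha beta gamma T D' ->
  arc_cover alpha beta gamma T D' D <->
  ((arc_move_of MoveA D D' \/ arc_move_of MoveB D D') /\
   crossings D' + 1 = crossings D).
Proof.
move=> _ _ _ _ _ hb hD hD'.
have gD := DG_good hb hD.
have gD' := DG_good hb hD'.
have sE : ssum D' = ssum D := LR_ssum hD' hD.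
split.
- move=> [[hle hnp] hno].
  case: (le_inv hle) => [hp|[D1 [k [hm hle1]]]]; first by rewrite hp in hnp.
  have [g1 s1 c1 cnt1] := le_chain hle1 gD.
  have hs := move_ssum hm.
  have hk : k = MoveA \/ k = MoveB.
    by case: k hm hs => _ hs; auto; exfalso; lia.
  have sc : forall i, scount i D' = scount i D1 by case: hk hm hs => -> _ [].
  have cr := moveAB_cross g1 hm hk.
  case: (boolP (perm_eq D1 D)) => hp.
  + have hmD := move_perm hp hm.
    case: hk => hk; subst k.
    * split; first by left.
      move: (hmD) => [a [b [c [d [r [h1 [h2 [h3 [h4 [hX hY]]]]]]]]]].
      have e := crossings_A gD h1 h2 h3 h4 hX hY.
      case: (posnP (sumn (map (wA a b c d) r))) => z; first lia.
      exfalso; apply: hno; have [x xr hx] := sumn_pos z.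
      exact: interA hD gD h1 h2 h3 h4 hX hY xr hx.
    * split; first by right.
      move: (hmD) => [a [b [c [r [h1 [h2 [h3 [hX hY]]]]]]]].
      have e := crossings_B gD h1 h2 h3 hX hY.
      case: (posnP (sumn (map (wB a b c) r))) => z; first lia.
      exfalso; apply: hno; have [x xr hx] := sumn_pos z.
      exact: interB hD gD h1 h2 h3 hX hY xr hx.
  + exfalso; apply: hno; exists D1; split.
    * move: hD hD' => [[hw [ha [hpo hi]]] hl] [_ hl'].
      case: g1 => gw1 _; case: cnt1 => [ca [cp ci]].
      split.
      -- split => //; split; first by rewrite ca.
         split; first by rewrite cp.
         by move=> i hi0; have := ci i; rewrite /inc => ->; apply: hi.
      -- by move=> i hi0; have := sc i; rewrite /scount => <-; apply: hl'.
    * split; split.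
      -- apply: (arc_le_step (D1 := D1)); first by exists k.
         by apply: arc_le_refl; exact: perm_refl.
      -- by apply/negP => hp'; have := crossings_perm hp'; lia.
      -- exact: hle1.
      -- exact: hp.
- move=> [hm ce].
  have [k [hk hmk]] : exists k, (k = MoveA \/ k = MoveB) /\ arc_move_of k D D'.
    by case: hm => h; [exists MoveA | exists MoveB]; auto.
  split; first split.
  + apply: (arc_le_step (D1 := D)); first by exists k.
    by apply: arc_le_refl; exact: perm_refl.
  + by apply/negP => hp; have := crossings_perm hp; lia.
  + move=> [D0 [hD0 [[hl1 hn1] [hl2 hn2]]]].
    have g0 := DG_good hb hD0.
    have [_ _ c2 _] := le_chain hl2 gD.
    have [_ _ c1 _] := le_chain hl1 g0.
    have s0 : ssum D0 = ssum D := LR_ssum hD0 hD.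
    have s0' : ssum D' = ssum D0 := LR_ssum hD' hD0.
    have [c2a c2b] := c2 s0.
    have [c1a c1b] := c1 s0'.
    have n1 : crossings D' <> crossings D0 by move=> e; move: hn1; rewrite (c1b e).
    have n2 : crossings D0 <> crossings D by move=> e; move: hn2; rewrite (c2b e).
    lia.
Qed.
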